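(* For all natural numbers $m,n$, the polytope $\operatorname{Hom}(\Box_m,\triangle_n)$ has exactly $(n+1)(mn+1)$ vertices. Moreover, $\operatorname{Hom}(\Box_m,\triangle_n)$ is affinely isomorphic to the convex hull in $\mathbb{R}^{n+nm}$ of the points $$0,\quad 2e_i,\quad e_i+e_{ik},\quad e_i-e_{ik},\quad (e_i+e_j)+(e_{ik}-e_{jk})\ \ (i\ne j),$$ where $i,j$ range over $\{1,\ldots,n\}$ and $k$ over $\{1,\ldots,m\}$, and these points are exactly its vertices.
   Context: For convex polytopes $P,Q$, $\operatorname{Hom}(P,Q)$ is the set of maps $P\to Q$ that are restrictions of affine maps $\operatorname{Aff}(P)\to\operatorname{Aff}(Q)$; it is a convex polytope in the affine space of affine maps $\operatorname{Aff}(P)\to\operatorname{Aff}(Q)$. $\triangle_n=\operatorname{conv}(0,e_1,\ldots,e_n)\subset\mathbb{R}^n$, $\Box_m=\operatorname{conv}\{(a_1,\ldots,a_m):a_i=\pm1\}\subset\mathbb{R}^m$. In $\mathbb{R}^{n+nm}$ the standard basis vectors are indexed by single indices $i\in\{1,\ldots,n\}$ (denoted $e_i$) and double indices $(i,k)$ with $i\in\{1,\ldots,n\}$, $k\in\{1,\ldots,m\}$ (denoted $e_{ik}$). *)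

(* Defs.v *)
From HB Require Import structures.
From mathcomp Require Import all_boot all_order all_algebra.
From mathcomp Require Import reals.
Set Implicit Arguments. Unset Strict Implicit. Unset Printing Implicit Defensive.
Import Order.TTheory GRing.Theory Num.Theory.
Local Open Scope ring_scope.

Section Defs.
Variable R : realType.

Definition hull (V : lmodType R) (s : seq V) : V -> Prop :=
  fun x => exists w : 'I_(size s) -> R,
    (forall i, 0 <= w i) /\ \sum_i w i = 1 /\ x = \sum_i w i *: s`_i.

Definition is_vertex (V : lmodType R) (S : V -> Prop) (v : V) : Prop :=
  S v /\ forall x y (t : R), S x -> S y -> 0 < t < 1 ->
    v = t *: x + (1 - t) *: y -> x = v /\ y = v.

Definition affine_map (V W : lmodType R) (phi : V -> W) : Prop :=
  forall x y (t : R), phi (t *: x + (1 - t) *: y) = t *: phi x + (1 - t) *: phi y.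

Definition cube_pts (m : nat) : seq 'cV[R]_m :=
  [seq \col_k (if (f : {ffun 'I_m -> bool}) k then 1 else -1) | f <- enum {ffun 'I_m -> bool}].
Definition cube (m : nat) : 'cV[R]_m -> Prop := hull (cube_pts m).

Definition simplex_pts (n : nat) : seq 'cV[R]_n :=
  0 :: [seq delta_mx i 0 | i <- enum 'I_n].
Definition simplex (n : nat) : 'cV[R]_n -> Prop := hull (simplex_pts n).

(* An affine map R^m -> R^n is x |-> b + A x, encoded by the pair (b, A);
   this identifies the space of affine maps with R^n x R^(n x m). *)
Definition affmap (m n : nat) := ('cV[R]_n * 'M[R]_(n, m))%type.
Definition aff_eval (m n : nat) (f : affmap m n) (x : 'cV[R]_m) : 'cV[R]_n :=
  f.1 + f.2 *m x.

Definition HomBS (m n : nat) : affmap m n -> Prop :=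
  fun f => forall x, cube x -> simplex (aff_eval f x).

(* R^(n + nm): the first n coordinates are indexed by i, the last n*m by
   the double index (i,k) via mxvec_index i k *)
Definition coordspace (n m : nat) := 'cV[R]_(n + n * m).
Definition e1 (n m : nat) (i : 'I_n) : coordspace n m :=
  delta_mx (lshift (n * m) i) 0.
Definition e2 (n m : nat) (i : 'I_n) (k : 'I_m) : coordspace n m :=
  delta_mx (rshift n (mxvec_index i k)) 0.

Definition hom_pts (n m : nat) : seq (coordspace n m) :=
  0 :: [seq 2%:R *: e1 m i | i <- enum 'I_n]
    ++ [seq e1 m i + e2 i k | i <- enum 'I_n, k <- enum 'I_m]
    ++ [seq e1 m i - e2 i k | i <- enum 'I_n, k <- enum 'I_m]
    ++ flatten [seq [seq (e1 m i + e1 m j) + (e2 i k - e2 j k)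
                      | j <- [seq j <- enum 'I_n | j != i], k <- enum 'I_m]
               | i <- enum 'I_n].
End Defs.

(* Main.v *)
Require Import Defs.
From HB Require Import structures.
From mathcomp Require Import all_boot all_order all_algebra.
From mathcomp Require Import reals.
From mathcomp Require Import ring lra zify.
Set Implicit Arguments. Unset Strict Implicit. Unset Printing Implicit Defensive.
Import Order.TTheory GRing.Theory Num.Theory.
Local Open Scope ring_scope.



Section Generic.
Variable R : realType.
Variable V : lmodType R.

Definition cone (s : seq V) (x : V) (mu : R) := exists w : 'I_(size s) -> R,
  (forall i, 0 <= w i) /\ \sum_i w i = mu /\ x = \sum_i w i *: s`_i.

Lemma cone_hull (s : seq V) x : hull s x <-> cone s x 1.
Proof. by []. Qed.

Lemma cone0 s : cone s 0 0.
Proof.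
exists (fun _ => 0); split=> //; split; first by rewrite big1.
by rewrite big1 // => i _; rewrite scale0r.
Qed.

Lemma coneD s x y a b : cone s x a -> cone s y b -> cone s (x + y) (a + b).
Proof.
move=> [w [w0 [ws ->]]] [w' [w0' [ws' ->]]].
exists (fun i => w i + w' i); split; first by move=> i; rewrite addr_ge0.
split; first by rewrite big_split /= ws ws'.
by rewrite -big_split /=; apply: eq_bigr => i _; rewrite scalerDl.
Qed.

Lemma cone_pt s p a : p \in s -> 0 <= a -> cone s (a *: p) a.
Proof.
move=> ps a0; have hi : (index p s < size s)%N by rewrite index_mem.
set i0 := Ordinal hi.
exists (fun i => if i == i0 then a else 0); split.
  by move=> i; case: ifP.
split.
  by rewrite (bigD1 i0) //= eqxx big1 ?addr0 // => i /negbTE ->.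
rewrite (bigD1 i0) //= eqxx big1 ?addr0; last by move=> i /negbTE ->; rewrite scale0r.
by rewrite nth_index.
Qed.

Lemma cone_sum s (I : Type) (r : seq I) (P : pred I) (F : I -> V) (G : I -> R) :
  (forall i, P i -> cone s (F i) (G i)) ->
  cone s (\sum_(i <- r | P i) F i) (\sum_(i <- r | P i) G i).
Proof.
move=> H; apply: (big_ind2 (fun x a => cone s x a)) => //.
  exact: cone0.
by move=> *; apply: coneD.
Qed.

Lemma hull_pt (s : seq V) p : p \in s -> hull s p.
Proof. by move=> ps; rewrite cone_hull -[p]scale1r; apply: cone_pt. Qed.

Lemma hull_cone (s : seq V) x : cone s x 1 -> hull s x.
Proof. by []. Qed.

Lemma vertex_in (s : seq V) v : is_vertex (hull s) v -> v \in s.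
Proof.
move=> [[w [w0 [ws vE]]] ext].
have [p wp] : exists p, 0 < w p.
  case: (boolP [exists p, 0 < w p]) => [/existsP//|/existsPn H].
  have : \sum_i w i <= 0 by apply: sumr_le0 => i _; rewrite leNgt H.
  by rewrite ws ler10.
have Hrest : \sum_(q | q != p) w q = 1 - w p.
  by have := ws; rewrite (bigD1 p) //= => <-; lra.
have wp1 : w p <= 1.
  by rewrite -subr_ge0 -Hrest sumr_ge0.
have spin : s`_p \in s by rewrite mem_nth.
case: (eqVneq (w p) 1) => [wpe|wpn].
  have z : forall q, q != p -> w q = 0.
    move=> q qp; move: Hrest; rewrite wpe subrr => /eqP.
    by rewrite psumr_eq0 // => /allP/(_ q (mem_index_enum q)); rewrite qp => /eqP.
  rewrite vE (bigD1 p) //= big1 ?addr0 ?wpe ?scale1r // => q qp.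
  by rewrite z // scale0r.
have wp1' : w p < 1 by rewrite lt_neqAle wpn.
have d0 : 0 < 1 - w p by rewrite subr_gt0.
set y := \sum_(q | q != p) (w q / (1 - w p)) *: s`_q.
have hy : hull s y.
  exists (fun q => if q == p then 0 else w q / (1 - w p)); split.
    by move=> q; case: ifP => // _; rewrite divr_ge0 // ltW.
  split.
    rewrite (bigD1 p) //= eqxx add0r.
    rewrite (eq_bigr (fun q => w q / (1 - w p))); last by move=> q /negbTE ->.
    by rewrite -mulr_suml Hrest divff // lt0r_neq0.
  rewrite /y [RHS](bigD1 p) //= eqxx scale0r add0r.
  by apply: eq_bigr => q /negbTE ->.
have vE2 : v = w p *: s`_p + (1 - w p) *: y.
  rewrite vE (bigD1 p) //=; congr (_ + _).
  rewrite /y scaler_sumr; apply: eq_bigr => q _.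
  by rewrite scalerA mulrC -mulrA mulVf ?mulr1 // lt0r_neq0.
have [<- _] := ext _ _ (w p) (hull_pt spin) hy (introT andP (conj wp wp1')) vE2.
exact: spin.
Qed.

Lemma sep_vertex (s : seq V) (v : V) (l : V -> R) :
  (forall a x y, l (a *: x + y) = a * l x + l y) ->
  v \in s -> (forall p, p \in s -> p <> v -> l p < l v) -> is_vertex (hull s) v.
Proof.
move=> lin vs sep.
have l0 : l 0 = 0.
  have := lin 1 0 0; rewrite scaler0 addr0 mul1r; lra.
have lZ : forall a x, l (a *: x) = a * l x.
  by move=> a x; rewrite -[a *: x]addr0 lin l0 addr0.
have lsum : forall w : 'I_(size s) -> R,
    l (\sum_i w i *: s`_i) = \sum_i w i * l s`_i.
  move=> w; apply: (big_ind2 (fun x y => l x = y)).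
  - exact: l0.
  - by move=> x1 x2 y1 y2 <- <-; rewrite -[x1]scale1r lin mul1r scale1r.
  - by move=> i _; rewrite lZ.
have key : forall x, hull s x -> l x <= l v /\ (l x = l v -> x = v).
  move=> x [w [w0 [ws ->]]]; rewrite lsum.
  have le_i : forall i, w i * l s`_i <= w i * l v.
    move=> i; apply: ler_wpM2l => //.
    case: (eqVneq s`_i v) => [->//|ne].
    by apply/ltW/sep; [rewrite mem_nth | apply/eqP].
  split.
    rewrite -[l v]mul1r -ws mulr_suml; exact: ler_sum.
  move=> eqv.
  have z : forall i, w i * l v - w i * l s`_i = 0.
    move=> i; apply/eqP.
    have : \sum_(j < size s) (w j * l v - w j * l s`_j) == 0.
      by rewrite sumrB -mulr_suml ws mul1r eqv subrr.
    rewrite psumr_eq0; last by move=> j _; rewrite subr_ge0.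
    by move=> /allP/(_ i (mem_index_enum i)).
  rewrite -[v]scale1r -ws scaler_suml; apply: eq_bigr => i _.
  case: (eqVneq s`_i v) => [->//|ne].
  have lt : l s`_i < l v by apply/sep; [rewrite mem_nth | apply/eqP].
  have : w i * (l v - l s`_i) = 0 by rewrite mulrBr z.
  move/eqP; rewrite mulf_eq0 subr_eq0 (gt_eqF lt) orbF => /eqP ->.
  by rewrite !scale0r.
split; first exact: hull_pt.
move=> x y t hx hy /andP [t0 t1] vE.
have [lx ex] := key x hx; have [ly ey] := key y hy.
have e : l v = t * l x + (1 - t) * l y by rewrite {1}vE lin lZ.
split; [apply: ex | apply: ey]; nra.
Qed.

End Generic.

Section Transfer.
Variable R : realType.
Variables V W : lmodType R.

Lemma vertex_transfer (phi : V -> W) (psi : W -> V) (S : V -> Prop) (T : W -> Prop) :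
  affine_map phi -> cancel phi psi -> cancel psi phi ->
  (forall w, T w <-> exists f, S f /\ phi f = w) ->
  forall f, is_vertex S f <-> is_vertex T (phi f).
Proof.
move=> aff K1 K2 HT.
have STf : forall f, S f <-> T (phi f).
  move=> f; split; first by move=> Sf; apply/HT; exists f.
  by move/HT => [g [Sg /(can_inj K1) <-]].
have Spsi : forall w, T w -> S (psi w).
  by move=> w /HT [g [Sg <-]]; rewrite K1.
have affpsi : forall x y t, psi (t *: x + (1 - t) *: y) = t *: psi x + (1 - t) *: psi y.
  by move=> x y t; apply: (can_inj K1); rewrite aff !K2.
move=> f; split.
  move=> [Sf ext]; split; first exact/STf.
  move=> x y t Tx Ty tt e.
  have e' : f = t *: psi x + (1 - t) *: psi y by rewrite -affpsi -e K1.
  have [ex ey] := ext _ _ _ (Spsi _ Tx) (Spsi _ Ty) tt e'.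
  by split; [rewrite -ex | rewrite -ey]; rewrite K2.
move=> [Tf ext]; split; first exact/STf.
move=> x y t Sx Sy tt e.
have e' : phi f = t *: phi x + (1 - t) *: phi y by rewrite e aff.
have [ex ey] := ext _ _ _ (proj1 (STf x) Sx) (proj1 (STf y) Sy) tt e'.
by split; apply: (can_inj K1).
Qed.
End Transfer.



Section Specific.
Variable R : realType.
Variables n m : nat.
Notation CS := (coordspace R n m).

Definition Cc (j : 'I_n) (w : CS) : R := w (lshift (n * m) j) 0.
Definition Dd (j : 'I_n) (k : 'I_m) (w : CS) : R := w (rshift n (mxvec_index j k)) 0.

Lemma mxvec_index_eq (i j : 'I_n) (k l : 'I_m) :
  (mxvec_index i k == mxvec_index j l) = (i == j) && (k == l).
Proof.
rewrite /mxvec_index.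
apply/eqP/andP => [/cast_ord_inj/enum_rank_inj [-> ->] //|[/eqP-> /eqP->] //].
Qed.

Lemma coord_ext (w w' : CS) :
  (forall j, Cc j w = Cc j w') -> (forall j k, Dd j k w = Dd j k w') -> w = w'.
Proof.
move=> HC HD; apply/matrixP => r c; rewrite (ord1 c) -(splitK r).
case: (split r) => [j|q] /=; first exact: HC.
by case/mxvec_indexP: q => j k; apply: HD.
Qed.

Lemma CcD j (x y : CS) : Cc j (x + y) = Cc j x + Cc j y. Proof. by rewrite /Cc mxE. Qed.
Lemma CcB j (x y : CS) : Cc j (x - y) = Cc j x - Cc j y. Proof. by rewrite /Cc !mxE. Qed.
Lemma CcN j (x : CS) : Cc j (- x) = - Cc j x. Proof. by rewrite /Cc mxE. Qed.
Lemma DdN j k (x : CS) : Dd j k (- x) = - Dd j k x. Proof. by rewrite /Dd mxE. Qed.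
Lemma CcZ j a (x : CS) : Cc j (a *: x) = a * Cc j x. Proof. by rewrite /Cc mxE. Qed.
Lemma Cc0 j : Cc j (0 : CS) = 0. Proof. by rewrite /Cc mxE. Qed.
Lemma Cc_sum j I (r : seq I) (P : pred I) (F : I -> CS) :
  Cc j (\sum_(i <- r | P i) F i) = \sum_(i <- r | P i) Cc j (F i).
Proof. by rewrite /Cc summxE. Qed.
Lemma DdD j k (x y : CS) : Dd j k (x + y) = Dd j k x + Dd j k y. Proof. by rewrite /Dd mxE. Qed.
Lemma DdB j k (x y : CS) : Dd j k (x - y) = Dd j k x - Dd j k y. Proof. by rewrite /Dd !mxE. Qed.
Lemma DdZ j k a (x : CS) : Dd j k (a *: x) = a * Dd j k x. Proof. by rewrite /Dd mxE. Qed.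
Lemma Dd0 j k : Dd j k (0 : CS) = 0. Proof. by rewrite /Dd mxE. Qed.
Lemma Dd_sum j k I (r : seq I) (P : pred I) (F : I -> CS) :
  Dd j k (\sum_(i <- r | P i) F i) = \sum_(i <- r | P i) Dd j k (F i).
Proof. by rewrite /Dd summxE. Qed.

Lemma Cc_e1 j i : Cc j (e1 R m i : CS) = (j == i)%:R.
Proof. by rewrite /Cc /e1 mxE eq_shift andbT. Qed.
Lemma Dd_e1 j k i : Dd j k (e1 R m i : CS) = 0.
Proof. by rewrite /Dd /e1 mxE eq_shift. Qed.
Lemma Cc_e2 j i k : Cc j (e2 R i k : CS) = 0.
Proof. by rewrite /Cc /e2 mxE eq_shift. Qed.
Lemma Dd_e2 j k i k' : Dd j k (e2 R i k' : CS) = ((j == i) && (k == k'))%:R.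
Proof. by rewrite /Dd /e2 mxE eq_shift mxvec_index_eq andbT. Qed.

Definition coordE := (CcD, CcB, CcN, DdN, CcZ, Cc0, Cc_sum, DdD, DdB, DdZ, Dd0, Dd_sum,
  Cc_e1, Dd_e1, Cc_e2, Dd_e2).


Inductive lab := LZ | LT of 'I_n | LP of 'I_n & 'I_m | LN of 'I_n & 'I_m
  | LX of 'I_n & 'I_n & 'I_m.

Definition valid (l : lab) : bool := if l is LX i j _ then i != j else true.

Definition g (l : lab) : CS :=
  match l with
  | LZ => 0
  | LT i => 2%:R *: e1 R m i
  | LP i k => e1 R m i + e2 R i k
  | LN i k => e1 R m i - e2 R i k
  | LX i j k => (e1 R m i + e1 R m j) + (e2 R i k - e2 R j k)
  end.

Lemma mem_pts (w : CS) : w \in hom_pts R n m <-> exists l, valid l /\ w = g l.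
Proof.
rewrite /hom_pts inE !mem_cat; split.
  move=> /orP[/eqP->|/orP[/mapP[i _ ->]|/orP[/allpairsP[[i k] [_ _ ->]]|/orP[]]]].
  - by exists LZ.
  - by exists (LT i).
  - by exists (LP i k).
  - by move=> /allpairsP[[i k] [_ _ ->]]; exists (LN i k).
  - move=> /flatten_mapP[i _ /allpairsP[[j k] [/= jin _ ->]]].
    exists (LX i j k); rewrite mem_filter in jin; case/andP: jin => jin _.
    by split => //=; rewrite eq_sym.
move=> [[|i|i k|i k|i j k] [/= vl ->]].
- by rewrite eqxx.
- by apply/orP; right; apply/orP; left; apply/map_f; rewrite mem_enum.
- by do 2 (apply/orP; right); apply/orP; left; apply/allpairsP; exists (i, k); rewrite !mem_enum.
- by do 3 (apply/orP; right); apply/orP; left; apply/allpairsP; exists (i, k); rewrite !mem_enum.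
- do 4 (apply/orP; right); apply/flatten_mapP; exists i; first by rewrite mem_enum.
  by apply/allpairsP; exists (j, k); rewrite /= mem_filter !mem_enum eq_sym vl.
Qed.

Definition ua (a : 'I_n -> R) (b : 'I_n -> 'I_m -> R) : CS :=
  col_mx (\col_i a i) (mxvec (\matrix_(j, k) b j k))^T.
Definition L a b (w : CS) : R := \sum_r ua a b r 0 * w r 0.

Lemma L_lin a b c (x y : CS) : L a b (c *: x + y) = c * L a b x + L a b y.
Proof.
rewrite /L mulr_sumr -big_split /=; apply: eq_bigr => r _.
by rewrite !mxE mulrDr mulrCA.
Qed.

Lemma L_delta a b r0 : L a b (delta_mx r0 0) = ua a b r0 0.
Proof.
rewrite /L (bigD1 r0) //= [delta_mx _ _ _ _]mxE !eqxx mulr1 big1 ?addr0 // => r /negbTE nr.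
by rewrite [delta_mx _ _ _ _]mxE nr mulr0.
Qed.

Lemma L_e1 a b i : L a b (e1 R m i) = a i.
Proof. by rewrite /e1 L_delta /ua col_mxEu mxE. Qed.
Lemma L_e2 a b i k : L a b (e2 R i k) = b i k.
Proof. by rewrite /e2 L_delta /ua col_mxEd mxE mxvecE mxE. Qed.

Definition ev a b (l : lab) : R :=
  match l with
  | LZ => 0
  | LT i => 2 * a i
  | LP i k => a i + b i k
  | LN i k => a i - b i k
  | LX i j k => (a i + a j) + (b i k - b j k)
  end.

Lemma L_g a b l : L a b (g l) = ev a b l.
Proof.
have L0 : L a b 0 = 0 by rewrite /L big1 // => r _; rewrite [X in _ * X]mxE mulr0.
have LD : forall x y, L a b (x + y) = L a b x + L a b y.
  by move=> x y; rewrite -[x]scale1r L_lin mul1r scale1r.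
have LZ' : forall c x, L a b (c *: x) = c * L a b x.
  by move=> c x; rewrite -[c *: x]addr0 L_lin L0 addr0.
have LN' : forall x, L a b (- x) = - L a b x.
  by move=> x; rewrite -scaleN1r LZ' mulN1r.
case: l => [|i|i k|i k|i j k] /=; rewrite ?L0 ?LD ?LN' ?LZ' ?L_e1 ?L_e2 //.
Qed.

Definition al (l : lab) : 'I_n -> R :=
  match l with
  | LZ => fun _ => -1
  | LT i => fun j => (j == i)%:R
  | LP i _ | LN i _ => fun j => if j == i then 1 else -1
  | LX i j _ => fun l => if (l == i) || (l == j) then 1 else -1
  end.

Definition bl (l : lab) : 'I_n -> 'I_m -> R :=
  match l with
  | LZ | LT _ => fun _ _ => 0
  | LP i k => fun j k' => if (j == i) && (k' == k) then 2 else 0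
  | LN i k => fun j k' => if (j == i) && (k' == k) then -2 else 0
  | LX i j k => fun l k' => if k' == k then
                  (if l == i then 2 else if l == j then -2 else 0) else 0
  end.

Lemma sep l l' : valid l -> valid l' ->
  ev (al l) (bl l) l' < ev (al l) (bl l) l \/ l' = l.
Proof.
case: l => [|i|i k|i k|i j k]; case: l' => [|i'|i'' k'|i' k'|i' j' k'] /= vl vl';
  repeat (rewrite ?eqxx /=; match goal with |- context [?x == ?y] => case: (eqVneq x y) => ? end; subst);
  rewrite ?eqxx /= in vl vl' *;
  try (match goal with H : is_true (?x != ?x) |- _ => by rewrite eqxx in H end);
  (by right) || (by left; lra).
Qed.


Lemma g_inj l l' : valid l -> valid l' -> g l = g l' -> l = l'.
Proof.
move=> vl vl' e; have := sep vl vl'; rewrite -!L_g e => -[|->//].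
by rewrite ltxx.
Qed.

Lemma vertex_pts w : w \in hom_pts R n m -> is_vertex (hull (hom_pts R n m)) w.
Proof.
move=> ws; have [l [vl wE]] := proj1 (mem_pts w) ws.
apply: (@sep_vertex _ _ _ _ (L (al l) (bl l))) => //.
  exact: L_lin.
move=> p /mem_pts [l' [vl' ->]] ne.
rewrite wE !L_g; have [//|e] := sep vl vl'.
by exfalso; apply: ne; rewrite wE e.
Qed.

Lemma uniq_flatten_map (S T : eqType) (s : seq S) (t : S -> seq T) :
  uniq s -> (forall x, x \in s -> uniq (t x)) ->
  (forall x y z, x \in s -> y \in s -> z \in t x -> z \in t y -> x = y) ->
  uniq (flatten [seq t x | x <- s]).
Proof.
elim: s => //= x s IH /andP[xs us] ut hd.
rewrite cat_uniq ut ?mem_head //= IH //; last 2 first.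
- by move=> y ys; apply: ut; rewrite inE ys orbT.
- by move=> y y' z ys ys'; apply: hd; rewrite inE ?ys ?ys' orbT.
rewrite andbT; apply/hasPn => z /flatten_mapP[y ys zy]; apply/negP => zx.
have ys' : y \in x :: s by rewrite inE ys orbT.
have exy := hd x y z (mem_head _ _) ys' zx zy.
by move: xs; rewrite exy ys.
Qed.

Lemma uniq_pts : uniq (hom_pts R n m).
Proof.
have gi := g_inj.
rewrite /hom_pts cons_uniq; apply/andP; split.
  have nz : forall l, valid l -> l <> LZ -> 0 <> g l.
    by move=> l vl nl e; apply: nl; symmetry; apply: (gi LZ l isT vl e).
  rewrite !mem_cat; apply/negP => /or4P[/mapP[i _]|/allpairsP[[i k] [_ _]]|/allpairsP[[i k] [_ _]]|].
  - by apply: (nz (LT i)).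
  - by apply: (nz (LP i k)).
  - by apply: (nz (LN i k)).
  move=> /flatten_mapP[i _ /allpairsP[[j k] [/= jin _]]].
  rewrite mem_filter in jin; case/andP: jin; rewrite eq_sym => jin _.
  by apply: (nz (LX i j k)).
have vX : forall i j k, j \in [seq j <- enum 'I_n | j != i] -> valid (LX i j k).
  by move=> i j k; rewrite mem_filter /= eq_sym => /andP[].
rewrite cat_uniq; apply/and3P; split.
- rewrite map_inj_uniq ?enum_uniq // => i i' e.
  by have [] := gi (LT i) (LT i') isT isT e.
- apply/hasPn => z; rewrite !mem_cat => /or3P[]; [move=> /allpairsP[[i k] [_ _ ->]]
    | move=> /allpairsP[[i k] [_ _ ->]] | move=> /flatten_mapP[i _ /allpairsP[[j k] [/= /vX jin _ ->]]]];
    apply/negP => /mapP[i' _ e].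
  + by have := gi (LP i k) (LT i') isT isT e.
  + by have := gi (LN i k) (LT i') isT isT e.
  + by have := gi (LX i j k) (LT i') (jin k) isT e.
rewrite cat_uniq; apply/and3P; split.
- apply: allpairs_uniq; rewrite ?enum_uniq // => -[i k] [i' k'] _ _ /= e.
  by have [-> ->] := gi (LP i k) (LP i' k') isT isT e.
- apply/hasPn => z; rewrite !mem_cat => /orP[]; [move=> /allpairsP[[i k] [_ _ ->]]
    | move=> /flatten_mapP[i _ /allpairsP[[j k] [/= /vX jin _ ->]]]];
    apply/negP => /allpairsP[[i' k'] [_ _ e]].
  + by have := gi (LN i k) (LP i' k') isT isT e.
  + by have := gi (LX i j k) (LP i' k') (jin k) isT e.
rewrite cat_uniq; apply/and3P; split.
- apply: allpairs_uniq; rewrite ?enum_uniq // => -[i k] [i' k'] _ _ /= e.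
  by have [-> ->] := gi (LN i k) (LN i' k') isT isT e.
- apply/hasPn => z /flatten_mapP[i _ /allpairsP[[j k] [/= /vX jin _ ->]]].
  apply/negP => /allpairsP[[i' k'] [_ _ e]].
  by have := gi (LX i j k) (LN i' k') (jin k) isT e.
apply: uniq_flatten_map; first by rewrite -?enumT enum_uniq.
  move=> i _; apply: allpairs_uniq.
  - by apply: filter_uniq; rewrite -?enumT enum_uniq.
  - by rewrite -?enumT enum_uniq.
  move=> -[j k] [j' k'] /allpairsP[[j1 k1] [/= /vX j1in _ [-> ->]]]
    /allpairsP[[j2 k2] [/= /vX j2in _ [-> ->]]] /= e.
  by have [-> ->] := gi (LX i j1 k1) (LX i j2 k2) (j1in k1) (j2in k2) e.
move=> i i' z _ _ /allpairsP[[j k] [/= /vX jin _ ->]] /allpairsP[[j' k'] [/= /vX jin' _ e]].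
by have [] := gi (LX i j k) (LX i' j' k') (jin k) (jin' k') e.
Qed.


Lemma arith (a b : nat) : (a + (a*b + (a*b + a.-1*b*a))).+1 = ((a+1)*(b*a+1))%N.
Proof. case: a => [|a] /=; nia. Qed.

Lemma size_pts : size (hom_pts R n m) = ((n + 1) * (m * n + 1))%N.
Proof.
rewrite /hom_pts /= !size_cat size_map !size_allpairs size_flatten /shape -map_comp.
have cnt : forall i : 'I_n, count (fun j => j != i) (enum 'I_n) = n.-1.
  move=> i; have := count_predC (pred1 i) (enum 'I_n).
  rewrite size_enum_ord (count_uniq_mem _ (enum_uniq _)) mem_enum add1n => e.
  by rewrite -[in RHS]e.
rewrite (eq_map (g := fun _ => (n.-1 * m)%N)); last first.
  by move=> i /=; rewrite size_allpairs size_filter cnt size_enum_ord.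
have mc : forall (T : Type) (s : seq T) (c : nat), [seq c | _ <- s] = nseq (size s) c.
  by move=> T s c; elim: s => //= x s ->.
rewrite mc sumn_nseq size_enum_ord.
rewrite size_enum_ord; exact: arith.
Qed.

End Specific.



Section Poly.
Variable R : realType.
Variables n m : nat.
Notation CS := (coordspace R n m).
Notation Cc := (@Cc R n m).
Notation Dd := (@Dd R n m).
Notation E1 := (e1 R m).
Notation E2 := (@e2 R n m).
Definition X (i j : 'I_n) (k : 'I_m) : CS := (E1 i + E1 j) + (E2 i k - E2 j k).

Ltac bcase := repeat (case: (_ == _)); rewrite /= ?mulr1n ?mulr0n ?mul1r ?mul0r ?mulr1 ?mulr0 ?addr0 ?add0r ?subr0 ?sub0r; try lra.

Lemma Cc_X l i j k : Cc l (X i j k) = (l == i)%:R + (l == j)%:R.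
Proof. by rewrite /X !coordE; bcase. Qed.
Lemma Dd_X l k' i j k : Dd l k' (X i j k) = (k' == k)%:R * ((l == i)%:R - (l == j)%:R).
Proof. by rewrite /X !coordE; bcase. Qed.
Lemma Cc_P l i k : Cc l (E1 i + E2 i k) = (l == i)%:R.
Proof. by rewrite !coordE; bcase. Qed.
Lemma Dd_P l k' i k : Dd l k' (E1 i + E2 i k) = (k' == k)%:R * (l == i)%:R.
Proof. by rewrite !coordE; bcase. Qed.
Lemma Cc_N l i k : Cc l (E1 i - E2 i k) = (l == i)%:R.
Proof. by rewrite !coordE; bcase. Qed.
Lemma Dd_N l k' i k : Dd l k' (E1 i - E2 i k) = - ((k' == k)%:R * (l == i)%:R).
Proof. by rewrite !coordE; bcase. Qed.
Lemma Cc_T l i : Cc l (2%:R *: E1 i) = 2 * (l == i)%:R.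
Proof. by rewrite !coordE. Qed.
Lemma Dd_T l k i : Dd l k (2%:R *: E1 i) = 0.
Proof. by rewrite !coordE mulr0. Qed.

Lemma sum_ind (p : nat) (F : 'I_p -> R) (l : 'I_p) : \sum_i F i * (l == i)%:R = F l.
Proof.
rewrite (bigD1 l) //= eqxx mulr1 big1 ?addr0 // => i /negbTE.
by rewrite eq_sym => ->; rewrite mulr0.
Qed.

Lemma sum_ind1 (p : nat) (l : 'I_p) : \sum_i (l == i)%:R = 1 :> R.
Proof. by rewrite -[RHS](sum_ind (fun _ => 1) l); apply: eq_bigr => i _; rewrite mul1r. Qed.

Lemma sum_ind1' (p : nat) (l : 'I_p) : \sum_i (i == l)%:R = 1 :> R.
Proof. by rewrite -[RHS](sum_ind1 l); apply: eq_bigr => i _; rewrite eq_sym. Qed.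

Definition Qc (w : CS) (mu : R) :=
  (forall j, \sum_k `|Dd j k w| <= Cc j w) /\
  \sum_j Cc j w + \sum_k `|\sum_j Dd j k w| <= 2 * mu.

Lemma Qc0 : Qc 0 0.
Proof.
split; first by move=> j; rewrite Cc0 big1 // => k _; rewrite Dd0 normr0.
rewrite mulr0 big1 ?add0r; last by move=> j _; rewrite Cc0.
by rewrite big1 // => k _; rewrite big1 ?normr0 // => j _; rewrite Dd0.
Qed.

Lemma QcD x y a b : Qc x a -> Qc y b -> Qc (x + y) (a + b).
Proof.
move=> [Hx Gx] [Hy Gy]; split.
  move=> j; rewrite CcD; apply: le_trans (lerD (Hx j) (Hy j)).
  rewrite -big_split /=; apply: ler_sum => k _; rewrite DdD; exact: ler_normD.
have -> : \sum_j Cc j (x + y) = \sum_j Cc j x + \sum_j Cc j y.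
  by rewrite -big_split; apply: eq_bigr => j _; rewrite CcD.
have : \sum_k `|\sum_j Dd j k (x + y)| <= \sum_k `|\sum_j Dd j k x| + \sum_k `|\sum_j Dd j k y|.
  rewrite -big_split /=; apply: ler_sum => k _.
  rewrite (eq_bigr (fun j => Dd j k x + Dd j k y)); last by move=> j _; rewrite DdD.
  rewrite big_split /=; exact: ler_normD.
lra.
Qed.

Lemma QcZ x a c : 0 <= c -> Qc x a -> Qc (c *: x) (c * a).
Proof.
move=> c0 [Hx Gx]; split.
  move=> j; rewrite CcZ (eq_bigr (fun k => c * `|Dd j k x|)).
    by rewrite -mulr_sumr ler_wpM2l.
  by move=> k _; rewrite DdZ normrM ger0_norm.
rewrite (eq_bigr (fun j => c * Cc j x)); last by move=> j _; rewrite CcZ.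
rewrite (eq_bigr (fun k => c * `|\sum_j Dd j k x|)); last first.
  move=> k _; rewrite (eq_bigr (fun j => c * Dd j k x)); last by move=> j _; rewrite DdZ.
  by rewrite -mulr_sumr normrM ger0_norm.
by rewrite -!mulr_sumr -mulrDr mulrCA ler_wpM2l.
Qed.

Lemma Qc_col (w : CS) (c d : 'I_n -> R) (k0 : 'I_m) :
  (forall j, Cc j w = c j) -> (forall j k, Dd j k w = (k == k0)%:R * d j) ->
  (forall j, `|d j| <= c j) -> \sum_j c j + `|\sum_j d j| <= 2 -> Qc w 1.
Proof.
move=> HC HD Hd Hs; split.
  move=> j; rewrite HC; apply: le_trans (Hd j).
  rewrite (eq_bigr (fun k => `|d j| * (k0 == k)%:R)) ?sum_ind //.
  by move=> k _; rewrite HD normrM mulrC eq_sym; case: (_ == _); rewrite ?normr1 ?normr0.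
rewrite mulr1 (eq_bigr (fun j => c j)); last by move=> j _; rewrite HC.
rewrite (eq_bigr (fun k => `|\sum_j d j| * (k0 == k)%:R)) ?sum_ind //.
move=> k _; rewrite (eq_bigr (fun j => (k == k0)%:R * d j)); last by move=> j _; rewrite HD.
by rewrite -mulr_sumr normrM mulrC eq_sym; case: (_ == _); rewrite ?normr1 ?normr0.
Qed.

Lemma Qc_T i : Qc (2%:R *: E1 i) 1.
Proof.
split.
  move=> j; rewrite Cc_T big1 ?mulr_ge0 // => k _; by rewrite Dd_T normr0.
rewrite (eq_bigr (fun j => 2 * (i == j)%:R)); last by move=> j _; rewrite Cc_T eq_sym.
rewrite -mulr_sumr sum_ind1 big1 ?addr0 ?mulr1 // => k _.
by rewrite big1 ?normr0 // => j _; rewrite Dd_T.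
Qed.

Lemma Qc_pts (w : CS) : w \in hom_pts R n m -> Qc w 1.
Proof.
move=> /mem_pts [[|i|i k|i k|i j k] [/= vl ->]].
- split; first by move=> j; rewrite Cc0 big1 // => k _; rewrite Dd0 normr0.
  rewrite big1 ?add0r; last by move=> j _; rewrite Cc0.
  by rewrite big1 ?mulr1 // => k _; rewrite big1 ?normr0 // => j _; rewrite Dd0.
- exact: Qc_T.
- apply: (@Qc_col _ (fun j => (j == i)%:R) (fun j => (j == i)%:R) k).
  + by move=> j; rewrite Cc_P.
  + by move=> j k'; rewrite Dd_P.
  + by move=> j; rewrite ger0_norm.
  + by rewrite sum_ind1' normr1; lra.
- apply: (@Qc_col _ (fun j => (j == i)%:R) (fun j => - (j == i)%:R) k).
  + by move=> j; rewrite Cc_N.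
  + by move=> j k'; rewrite Dd_N mulrN.
  + by move=> j; rewrite normrN ger0_norm.
  + by rewrite sumrN sum_ind1' normrN normr1; lra.
- apply: (@Qc_col _ (fun l => (l == i)%:R + (l == j)%:R) (fun l => (l == i)%:R - (l == j)%:R) k).
  + by move=> l; rewrite Cc_X.
  + by move=> l k'; rewrite Dd_X.
  + by move=> l; case: (_ == _); case: (_ == _); rewrite /= ?mulr1n ?mulr0n ?subrr ?normr0 ?subr0 ?sub0r ?normrN ?normr1 ?addr0 ?add0r; lra.
  + rewrite big_split sumrB /=.
    rewrite !sum_ind1' subrr normr0; lra.
Qed.


Lemma hull_Qc (w : CS) : hull (hom_pts R n m) w -> Qc w 1.
Proof.
move=> [c [c0 [cs ->]]]; rewrite -cs.
apply: (big_ind2 Qc); [exact: Qc0 | by move=> *; apply: QcD | move=> i _].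
have hs : (hom_pts R n m)`_i \in hom_pts R n m by apply: mem_nth.
by have := QcZ (c0 i) (Qc_pts hs); rewrite mulr1.
Qed.

Definition pos (a : R) : R := (`|a| + a) / 2.
Definition neg (a : R) : R := (`|a| - a) / 2.
Lemma pos_ge0 a : 0 <= pos a.
Proof. rewrite /pos divr_ge0 //; have := ler_norm (- a); rewrite normrN; lra. Qed.
Lemma neg_ge0 a : 0 <= neg a.
Proof. rewrite /neg divr_ge0 //; have := ler_norm a; lra. Qed.
Lemma pos_neg_sub a : pos a - neg a = a.
Proof. rewrite /pos /neg; lra. Qed.
Lemma pos_neg_add a : pos a + neg a = `|a|.
Proof. rewrite /pos /neg; lra. Qed.

Definition mx2 (P N : R) : R := (P + N + `|P - N|) / 2.
Lemma mx2_ge (P N : R) : P <= mx2 P N /\ N <= mx2 P N.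
Proof. rewrite /mx2; have := ler_norm (P - N); have := ler_norm (- (P - N)); rewrite normrN; lra. Qed.
Lemma frac_le1 (a b : R) : 0 <= a -> a <= b -> a / b <= 1.
Proof.
move=> a0 ab; case: (eqVneq b 0) => [->|b0]; first by rewrite invr0 mulr0.
have bp : 0 < b by rewrite lt_neqAle eq_sym b0 (le_trans a0 ab).
by rewrite ler_pdivrMr // mul1r.
Qed.
Lemma mx2_id (P N : R) : 0 <= P -> 0 <= N -> P + N - P * N / mx2 P N = mx2 P N.
Proof.
move=> P0 N0; rewrite /mx2; case: (lerP P N) => PN.
  have -> : (P + N + (N - P)) / 2 = N by lra.
  case: (eqVneq N 0) => [N00|Nn]; first by rewrite N00 invr0 !mulr0; lra.
  by rewrite -mulrA divff // mulr1; lra.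
have -> : (P + N + (P - N)) / 2 = P by lra.
have Pn : P != 0 by rewrite gt_eqF // (le_lt_trans N0 PN).
by rewrite mulrAC divff // mul1r; lra.
Qed.
Lemma mx2_half (P N : R) : mx2 P N - (P + N) / 2 = `|P - N| / 2.
Proof. rewrite /mx2; lra. Qed.

End Poly.



Section Dec.
Variable R : realType.
Variables n m : nat.
Notation CS := (coordspace R n m).
Notation Cc := (@Cc R n m).
Notation Dd := (@Dd R n m).
Notation E1 := (e1 R m).
Notation E2 := (@e2 R n m).
Notation X := (@X R n m).
Notation pos := (@pos R).
Notation neg := (@neg R).

Lemma sum2_indD (F : 'I_n -> 'I_n -> R) l :
  \sum_i \sum_j F i j * ((l == i)%:R + (l == j)%:R) = \sum_j F l j + \sum_i F i l.
Proof.
under eq_bigr => i _ do under eq_bigr => j _ do rewrite mulrDr.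
under eq_bigr => i _ do rewrite big_split /=.
rewrite big_split /=; congr (_ + _).
  by under eq_bigr => i _ do rewrite -mulr_suml; rewrite sum_ind.
by under eq_bigr => i _ do rewrite sum_ind.
Qed.

Lemma sum2_indB (F : 'I_n -> 'I_n -> R) l (b : R) :
  \sum_i \sum_j F i j * (b * ((l == i)%:R - (l == j)%:R)) = b * (\sum_j F l j - \sum_i F i l).
Proof.
under eq_bigr => i _ do under eq_bigr => j _ do rewrite mulrCA.
under eq_bigr => i _ do rewrite -mulr_sumr.
rewrite -mulr_sumr; congr (b * _).
under eq_bigr => i _ do under eq_bigr => j _ do rewrite mulrBr.
under eq_bigr => i _ do rewrite sumrB /=.
rewrite sumrB /=; congr (_ - _).
  by under eq_bigr => i _ do rewrite -mulr_suml; rewrite sum_ind.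
by under eq_bigr => i _ do rewrite sum_ind.
Qed.

Lemma sum_indM (p : nat) (F : 'I_p -> R) (l : 'I_p) (b : R) :
  \sum_i F i * (b * (l == i)%:R) = b * F l.
Proof. by under eq_bigr => i _ do rewrite mulrCA; rewrite -mulr_sumr sum_ind. Qed.

Lemma Qc_hull (x : CS) : Qc x 1 -> hull (hom_pts R n m) x.
Proof.
move=> [HQ HG].
set D := fun j k => Dd j k x.
set c := fun j => Cc j x.
set P := fun k => (\sum_j pos (D j k) : R).
set N := fun k => (\sum_j neg (D j k) : R).
set M := fun k => mx2 (P k) (N k).
set w := fun i j k => (pos (D i k) * neg (D j k) * (M k)^-1 : R).
set p := fun i k => (pos (D i k) * (1 - N k * (M k)^-1) : R).
set q := fun i k => (neg (D i k) * (1 - P k * (M k)^-1) : R).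
set r := fun i => (c i - \sum_k `|D i k|) / 2.
set Y := fun k => \sum_i \sum_j w i j k *: X i j k + \sum_i p i k *: (E1 i + E2 i k)
   + \sum_i q i k *: (E1 i - E2 i k).
set y := \sum_k Y k + \sum_i r i *: (2%:R *: E1 i).
have sw1 : forall l k, \sum_j w l j k = pos (D l k) * N k * (M k)^-1.
  by move=> l k; rewrite -mulr_suml -mulr_sumr.
have sw2 : forall l k, \sum_i w i l k = P k * neg (D l k) * (M k)^-1.
  by move=> l k; rewrite -mulr_suml -mulr_suml.
have CY : forall l k, Cc l (Y k) = (\sum_j w l j k + \sum_i w i l k) + p l k + q l k.
  move=> l k; rewrite /Y !CcD !Cc_sum; congr (_ + _ + _).
  - under eq_bigr => i _ do (rewrite Cc_sum; under eq_bigr => j _ do rewrite CcZ Cc_X).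
    exact: sum2_indD.
  - by under eq_bigr => i _ do rewrite CcZ Cc_P; rewrite sum_ind.
  - by under eq_bigr => i _ do rewrite CcZ Cc_N; rewrite sum_ind.
have DY : forall l k' k, Dd l k' (Y k) =
    (k' == k)%:R * ((\sum_j w l j k - \sum_i w i l k) + p l k - q l k).
  move=> l k' k; rewrite /Y !DdD !Dd_sum mulrBr mulrDr; congr (_ + _ + _).
  - under eq_bigr => i _ do (rewrite Dd_sum; under eq_bigr => j _ do rewrite DdZ Dd_X).
    exact: sum2_indB.
  - by under eq_bigr => i _ do rewrite DdZ Dd_P; rewrite sum_indM.
  - by under eq_bigr => i _ do rewrite DdZ Dd_N mulrN; rewrite sumrN sum_indM.
have Cy : forall l, Cc l y = c l.
  move=> l; rewrite /y CcD Cc_sum.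
  under eq_bigr => k _ do rewrite CY sw1 sw2.
  rewrite Cc_sum [X in _ + X](eq_bigr (fun i => r i * (2 * (l == i)%:R))); last first.
    by move=> i _; rewrite CcZ Cc_T.
  rewrite sum_indM.
  rewrite (eq_bigr (fun k => `|D l k|)); last first.
    move=> k _; rewrite /p /q -pos_neg_add.
    ring.
  rewrite /r; lra.
have Dy : forall l k', Dd l k' y = D l k'.
  move=> l k'; rewrite /y DdD Dd_sum.
  under eq_bigr => k _ do rewrite DY sw1 sw2 mulrC.
  rewrite sum_ind Dd_sum big1 ?addr0; last by move=> i _; rewrite DdZ Dd_T mulr0.
  rewrite /p /q -[in RHS](pos_neg_sub (D l k')); ring.
have xy : x = y.
  by apply: coord_ext => [j|j k]; rewrite ?Cy ?Dy.
have P0 : forall k, 0 <= P k by move=> k; apply: sumr_ge0 => j _; apply: pos_ge0.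
have N0 : forall k, 0 <= N k by move=> k; apply: sumr_ge0 => j _; apply: neg_ge0.
have Mi0 : forall k, 0 <= (M k)^-1.
  by move=> k; rewrite invr_ge0; apply: le_trans (P0 k) (proj1 (mx2_ge _ _)).
have w0 : forall i j k, 0 <= w i j k.
  move=> i j k; apply: mulr_ge0; last exact: Mi0.
  by apply: mulr_ge0; [apply: pos_ge0 | apply: neg_ge0].
have p0 : forall i k, 0 <= p i k.
  move=> i k; rewrite mulr_ge0 ?pos_ge0 // subr_ge0.
  exact: frac_le1 (N0 k) (proj2 (mx2_ge _ _)).
have q0 : forall i k, 0 <= q i k.
  move=> i k; rewrite mulr_ge0 ?neg_ge0 // subr_ge0.
  exact: frac_le1 (P0 k) (proj1 (mx2_ge _ _)).
have r0 : forall i, 0 <= r i.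
  by move=> i; rewrite divr_ge0 // subr_ge0; apply: HQ.
have Xin : forall i j k, X i j k \in hom_pts R n m.
  move=> i j k; apply/mem_pts; case: (eqVneq i j) => [<-|ij].
    by exists (LT m i); split => //=; rewrite /X subrr addr0 scaler_nat mulr2n.
  by exists (LX i j k).
set mu := \sum_k (\sum_i \sum_j w i j k + \sum_i p i k + \sum_i q i k) + \sum_i r i.
have cy : cone (hom_pts R n m) y mu.
  apply: coneD.
    apply: cone_sum => k _; apply: coneD; first apply: coneD.
    - by apply: cone_sum => i _; apply: cone_sum => j _; apply: cone_pt.
    - apply: cone_sum => i _; apply: cone_pt => //.
      by apply/mem_pts; exists (LP i k).
    - apply: cone_sum => i _; apply: cone_pt => //.
      by apply/mem_pts; exists (LN i k).
  apply: cone_sum => i _; apply: cone_pt => //.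
  by apply/mem_pts; exists (LT m i).
have eM : forall k, \sum_i \sum_j w i j k + \sum_i p i k + \sum_i q i k = M k.
  move=> k.
  have e1 : \sum_i \sum_j w i j k = P k * N k * (M k)^-1.
    by under eq_bigr => i _ do rewrite sw1; rewrite -mulr_suml -mulr_suml.
  have e2 : \sum_i p i k = P k * (1 - N k * (M k)^-1) by rewrite -mulr_suml.
  have e3 : \sum_i q i k = N k * (1 - P k * (M k)^-1) by rewrite -mulr_suml.
  rewrite e1 e2 e3.
  transitivity (P k + N k - P k * N k / M k); first ring.
  exact: mx2_id.
have PN : forall k, P k - N k = \sum_j D j k.
  by move=> k; rewrite /P /N -sumrB; apply: eq_bigr => j _; rewrite pos_neg_sub.
have eM2 : forall k, M k = (P k + N k) / 2 + `|\sum_j D j k| / 2.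
  by move=> k; have := mx2_half (P k) (N k); rewrite PN /M; lra.
have sD : \sum_i \sum_k `|D i k| = \sum_k (P k + N k).
  rewrite exchange_big /=; apply: eq_bigr => k _.
  rewrite (eq_bigr (fun j => pos (D j k) + neg (D j k))); last by move=> j _; rewrite pos_neg_add.
  by rewrite big_split.
have HG' : \sum_j c j + \sum_k `|\sum_j D j k| <= 2 * 1 := HG.
have mu1 : mu <= 1.
  have -> : mu = \sum_k ((P k + N k) / 2 + `|\sum_j D j k| / 2) + \sum_i r i.
    by rewrite /mu; congr (_ + _); apply: eq_bigr => k _; rewrite eM eM2.
  rewrite big_split /= /r -!mulr_suml sumrB sD.
  lra.
rewrite cone_hull xy.
have h1 : 0 <= 1 - mu by lra.
have h0 : (0 : CS) \in hom_pts R n m by rewrite inE eqxx.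
have := coneD cy (cone_pt h0 h1).
rewrite scaler0 addr0.
by have -> : mu + (1 - mu) = 1 by lra.
Qed.
End Dec.



Section Hom.
Variable R : realType.
Variables m n : nat.
Notation CS := (coordspace R n m).
Notation AM := (affmap R m n).
Notation Cc := (@Cc R n m).
Notation Dd := (@Dd R n m).

Lemma simplexP (y : 'cV[R]_n) :
  simplex y <-> (forall i, 0 <= y i 0) /\ \sum_i y i 0 <= 1.
Proof.
have pts : forall v, v \in simplex_pts R n -> (forall i, 0 <= v i 0) /\ \sum_i v i 0 <= 1.
  move=> v; rewrite inE => /orP[/eqP->|/mapP[i _ ->]].
    by split=> [i|]; rewrite ?mxE // big1 // => i _; rewrite mxE.
  split=> [j|]; first by rewrite mxE.
  rewrite (bigD1 i) //= mxE !eqxx big1 ?addr0 // => j /negbTE nj.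
  by rewrite mxE nj.
have pn : forall p : 'I_(size (simplex_pts R n)), (simplex_pts R n)`_p \in simplex_pts R n.
  by move=> p; apply: mem_nth.
split.
  move=> [w [w0 [ws ->]]]; split.
    move=> i; rewrite summxE; apply: sumr_ge0 => p _; rewrite mxE mulr_ge0 //.
    by case: (pts ((simplex_pts R n)`_p) (pn p)) => + _; apply.
  under eq_bigr => i _ do rewrite summxE.
  rewrite exchange_big /= -ws; apply: ler_sum => p _.
  under eq_bigr => i _ do rewrite mxE.
  rewrite -mulr_sumr -[X in _ <= X]mulr1; apply: ler_wpM2l => //.
  by case: (pts ((simplex_pts R n)`_p) (pn p)).
move=> [y0 ys].
have yE : y = \sum_i y i 0 *: delta_mx i 0.
  rewrite {1}(matrix_sum_delta y); apply: eq_bigr => i _.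
  by rewrite big_ord1.
rewrite /simplex cone_hull.
have h0 : (0 : 'cV[R]_n) \in simplex_pts R n by rewrite inE eqxx.
have h1 : 0 <= 1 - \sum_i y i 0 by lra.
have cs : cone (simplex_pts R n) (\sum_i y i 0 *: delta_mx i 0) (\sum_i y i 0).
  apply: cone_sum => i _; apply: cone_pt (y0 i).
  by rewrite inE; apply/orP; right; apply: map_f; rewrite mem_enum.
have := coneD cs (cone_pt h0 h1); rewrite scaler0 addr0 -yE.
by have -> : \sum_i y i 0 + (1 - \sum_i y i 0) = 1 by lra.
Qed.

Lemma cube_bound (x : 'cV[R]_m) : cube x -> forall k, `|x k 0| <= 1.
Proof.
have pts : forall v, v \in cube_pts R m -> forall k, `|v k 0| = 1.
  by move=> v /mapP[f _ ->] k; rewrite mxE; case: (f k); rewrite ?normrN normr1.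
have pn : forall p : 'I_(size (cube_pts R m)), (cube_pts R m)`_p \in cube_pts R m.
  by move=> p; apply: mem_nth.
move=> [w [w0 [ws ->]]] k; rewrite summxE -ws.
apply: le_trans (ler_norm_sum _ _ _) _; apply: ler_sum => p _.
by rewrite mxE normrM pts ?pn // mulr1 ger0_norm.
Qed.

Lemma sign_cube (s : 'I_m -> bool) : cube (\col_k (if s k then 1 else -1) : 'cV[R]_m).
Proof.
apply: hull_pt; apply/mapP; exists [ffun k => s k]; first by rewrite mem_enum.
by apply/matrixP => k c; rewrite !mxE ffunE.
Qed.

Definition Qf (f : AM) :=
  (forall j, \sum_k `|f.2 j k| <= f.1 j 0) /\ \sum_j f.1 j 0 + \sum_k `|\sum_j f.2 j k| <= 1.

Lemma aff_evalE (f : AM) x j : aff_eval f x j 0 = f.1 j 0 + \sum_k f.2 j k * x k 0.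
Proof. by rewrite /aff_eval !mxE. Qed.

Lemma HomBS_Qf (f : AM) : HomBS f <-> Qf f.
Proof.
split.
  move=> H; split.
    move=> j.
    have := H _ (sign_cube (fun k => f.2 j k < 0)).
    move=> /simplexP [/(_ j) + _]; rewrite aff_evalE.
    under eq_bigr => k _ do rewrite mxE.
    rewrite (eq_bigr (fun k => - `|f.2 j k|)); last first.
      move=> k _; case: ltrP => h; first by rewrite mulr1 ltr0_norm // opprK.
      by rewrite mulrN1 ger0_norm.
    by rewrite sumrN subr_ge0.
  have := H _ (sign_cube (fun k => 0 <= \sum_j f.2 j k)).
  move=> /simplexP [_]; under eq_bigr => j _ do rewrite aff_evalE.
  rewrite big_split /= exchange_big /=.
  rewrite (eq_bigr (fun k => `|\sum_j f.2 j k|)) //.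
  move=> k _; rewrite mxE -mulr_suml; case: leP => h.
    by rewrite mulr1 ger0_norm.
  by rewrite mulrN1 ltr0_norm.
move=> [HQ HG] x /cube_bound xb; apply/simplexP; split.
  move=> j; rewrite aff_evalE; have := HQ j.
  have : - \sum_k `|f.2 j k| <= \sum_k f.2 j k * x k 0.
    rewrite -sumrN; apply: ler_sum => k _.
    have : `|f.2 j k| * `|x k 0| <= `|f.2 j k| by rewrite ler_piMr.
    have := ler_norm (- (f.2 j k * x k 0)); rewrite normrN normrM; lra.
  lra.
apply: le_trans HG; under eq_bigr => j _ do rewrite aff_evalE.
rewrite big_split /= exchange_big /= lerD2l; apply: ler_sum => k _.
rewrite -mulr_suml; apply: le_trans (ler_norm _) _; rewrite normrM.
by rewrite ler_piMr.
Qed.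

End Hom.



Section Phi.
Variable R : realType.
Variables m n : nat.
Notation CS := (coordspace R n m).
Notation AM := (affmap R m n).
Notation Cc := (@Cc R n m).
Notation Dd := (@Dd R n m).

Definition phi (f : AM) : CS := 2%:R *: col_mx f.1 (mxvec f.2)^T.
Definition psi (w : CS) : AM := (2^-1 *: \col_j Cc j w, 2^-1 *: \matrix_(j, k) Dd j k w).

Lemma Cc_phi f j : Cc j (phi f) = 2 * f.1 j 0.
Proof. by rewrite /Cc /phi mxE col_mxEu. Qed.
Lemma Dd_phi f j k : Dd j k (phi f) = 2 * f.2 j k.
Proof. by rewrite /Dd /phi mxE col_mxEd mxE mxvecE. Qed.

Lemma phiK : cancel phi psi.
Proof.
move=> [b A]; rewrite /psi; congr pair; apply/matrixP => j k.
  by rewrite (ord1 k) !mxE Cc_phi /=; field.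
by rewrite !mxE Dd_phi /=; field.
Qed.

Lemma psiK : cancel psi phi.
Proof.
move=> w; apply: coord_ext => [j|j k]; rewrite ?Cc_phi ?Dd_phi /= !mxE;
  by rewrite mulrA divff ?mul1r // pnatr_eq0.
Qed.

Lemma phi_aff : affine_map phi.
Proof.
move=> x y t; apply: coord_ext => [j|j k];
  rewrite ?Cc_phi ?Dd_phi ?CcD ?CcZ ?DdD ?DdZ ?Cc_phi ?Dd_phi /= !mxE; rewrite /Cc /Dd ?col_mxEu ?col_mxEd ?mxE ?mxvecE; ring.
Qed.

Lemma Qc_phi f : Qc (phi f) 1 <-> Qf f.
Proof.
have e1 : forall j, \sum_k `|Dd j k (phi f)| = 2 * \sum_k `|f.2 j k|.
  move=> j; rewrite mulr_sumr; apply: eq_bigr => k _.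
  by rewrite Dd_phi normrM ger0_norm.
have e2 : \sum_j Cc j (phi f) = 2 * \sum_j f.1 j 0.
  by rewrite mulr_sumr; apply: eq_bigr => j _; rewrite Cc_phi.
have e3 : \sum_k `|\sum_j Dd j k (phi f)| = 2 * \sum_k `|\sum_j f.2 j k|.
  rewrite mulr_sumr; apply: eq_bigr => k _.
  rewrite (eq_bigr (fun j => 2 * f.2 j k)); last by move=> j _; rewrite Dd_phi.
  by rewrite -mulr_sumr normrM ger0_norm.
rewrite /Qc /Qf e2 e3; split.
  move=> [H1 H2]; split; last by lra.
  by move=> j; have := H1 j; rewrite e1 Cc_phi; lra.
move=> [H1 H2]; split; last by lra.
by move=> j; have := H1 j; rewrite e1 Cc_phi; lra.
Qed.

Lemma hullE (w : CS) : hull (hom_pts R n m) w <-> exists f, HomBS f /\ phi f = w.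
Proof.
split.
  move=> /hull_Qc H; exists (psi w); rewrite psiK; split => //.
  by apply/HomBS_Qf/Qc_phi; rewrite psiK.
move=> [f [/HomBS_Qf/Qc_phi H <-]]; exact: Qc_hull.
Qed.

End Phi.

Theorem corollary4p2 (R : realType) (m n : nat) :
  (exists s : seq (affmap R m n),
     uniq s /\ size s = ((n + 1) * (m * n + 1))%N /\
     (forall f, is_vertex (@HomBS R m n) f <-> f \in s))
  /\ (exists phi : affmap R m n -> coordspace R n m,
        affine_map phi /\ bijective phi /\
        (forall w, hull (@hom_pts R n m) w <-> exists f, @HomBS R m n f /\ phi f = w))
  /\ (forall w, is_vertex (hull (@hom_pts R n m)) w <-> w \in @hom_pts R n m).
Proof.
have V3 : forall w, is_vertex (hull (@hom_pts R n m)) w <-> w \in @hom_pts R n m.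
  by move=> w; split; [apply: vertex_in | apply: vertex_pts].
split; last split; last exact: V3.
  exists (map (@psi R m n) (hom_pts R n m)); split.
    rewrite map_inj_uniq ?uniq_pts //; exact: can_inj (@psiK R m n).
  split; first by rewrite size_map size_pts.
  move=> f; rewrite (vertex_transfer (@phi_aff R m n) (@phiK R m n) (@psiK R m n) (@hullE R m n)).
  rewrite V3; split.
    by move=> h; rewrite -(phiK f); apply: map_f.
  by move=> /mapP[w ws ->]; rewrite psiK.
exists (@phi R m n); split; first exact: phi_aff.
split; last exact: hullE.
by exists (@psi R m n); [apply: phiK | apply: psiK].
Qed.
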